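(* Let $n,t\ge 0$ be integers with $n\ge 3t+1$, let $k=\lfloor t/5\rfloor+1$, and let $\mathcal P=[1:n-t]$. Let $E:\mathcal P\times\mathcal P\to\{0,1\}$ be symmetric ($E_{i,j}=E_{j,i}$; loops $E_{i,i}=1$ are allowed and count as edges). Let $i^\star\in\mathcal P$ and suppose there is a set $\mathcal C\subseteq\mathcal P\setminus\{i^\star\}$ such that $E_{i,i^\star}=1$ for all $i\in\mathcal C$, $\sum_{j\in\mathcal P}E_{i,j}\ge n-2t$ for all $i\in\mathcal C$, and $|\mathcal C|\ge n-2t-1$. Let $\mathcal D=\{i\in\mathcal P\setminus\{i^\star\}: \sum_{j\in\mathcal C}E_{i,j}\ge k\}$. Then $|\mathcal D|\ge n-9t/4-1$. *)

(* Defs.v *)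
From mathcomp Require Import all_boot all_order all_algebra.
Set Implicit Arguments. Unset Strict Implicit. Unset Printing Implicit Defensive.

(* Main.v *)
Require Import Defs.
From mathcomp Require Import all_boot all_order all_algebra.
From mathcomp Require Import zify ring lra.
Import Order.TTheory GRing.Theory Num.Theory.

Lemma arith (n t c d q : nat) :
  (3 * t + 1 <= n)%N -> (n - 2 * t - 1 <= c)%N -> (5 * q <= t)%N ->
  (c * (n - 2 * t - 1) <= d * c + (n - t - 1 - d) * q)%N ->
  (4 * n <= 4 * d + 9 * t + 4)%N.
Proof.
move=> H1 H2 H3 H4.
rewrite leqNgt; apply/negP => H5.
set m := (n - 2 * t - 1)%N in H2 H4.
have Hm : n = (m + 2 * t + 1)%N by rewrite /m; lia.
have Hdm : (4 * d + t < 4 * m)%N by lia.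
have Hd : (d < m)%N by lia.
have E1 : (n - t - 1 - d = (m - d) + t)%N by lia.
rewrite E1 in H4.
have Hcq : (4 * q <= c - q)%N by lia.
case: (posnP q) => [q0|qp].
  subst q. rewrite !muln0 addn0 in H4.
  have : (c * m <= c * d)%N by rewrite mulnC [X in (_ <= X)%N]mulnC in H4 *; lia.
  rewrite leq_pmul2l; first by rewrite leqNgt Hd.
  have: (t < 4 * m)%N by lia. lia.
nia.
Qed.

Theorem lemma8 (n t : nat) (E : 'I_(n - t) -> 'I_(n - t) -> bool)
  (istar : 'I_(n - t)) (C : {set 'I_(n - t)}) :
  (3 * t + 1 <= n)%N ->
  (forall i j, E i j = E j i) ->
  istar \notin C ->
  (forall i, i \in C -> E i istar) ->
  (forall i, i \in C -> (n - 2 * t <= \sum_(j < n - t) E i j)%N) ->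
  (n - 2 * t - 1 <= #|C|)%N ->
  let k := (t %/ 5 + 1)%N in
  let D := [set i | (i != istar) && (k <= \sum_(j in C) E i j)%N] in
  ((n%:R - 9%:R * t%:R / 4%:R - 1 : rat) <= (#|D|)%:R)%R.
Proof.
move=> Hn Esym Hi HCi HCdeg HC; cbv zeta.
set k := (t %/ 5 + 1)%N.
set D := [set i | _].
have S1 : forall i, i \in C -> (n - 2 * t - 1 <= \sum_(j | j != istar) E i j)%N.
  move=> i iC; have := HCdeg i iC.
  rewrite (bigD1 istar) //= HCi //; lia.
have S2 : (#|C| * (n - 2 * t - 1) <= \sum_(i in C) \sum_(j | j != istar) E i j)%N.
  rewrite -sum_nat_const; exact: leq_sum.
rewrite exchange_big /= in S2.
set q := (t %/ 5)%N.
have S3 : (\sum_(j | j != istar) \sum_(i in C) E i j <=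
           \sum_(j | j != istar) (if j \in D then #|C| else q))%N.
  apply: leq_sum => j jn.
  under eq_bigr => i _ do rewrite Esym.
  case: ifP => jD.
    rewrite -sum1_card; apply: leq_sum => i _; by case: (E j i).
  move: jD; rewrite /D inE jn /= /k => /negbT; rewrite -ltnNge /k /q; lia.
have S4 : (\sum_(j | j != istar) (if j \in D then #|C| else q) =
           #|D| * #|C| + (n - t - 1 - #|D|) * q)%N.
  rewrite (bigID (fun j => j \in D)) /=.
  rewrite (eq_bigr (fun _ => #|C|)); last by move=> j /andP[_ ->].
  rewrite [X in (_ + X)%N](eq_bigr (fun _ => q)); last by move=> j /andP[_ /negbTE ->].
  rewrite !sum_nat_const.
  have cD : #|[pred j | (j != istar) && (j \in D)]| = #|D|.
    apply: eq_card => j; rewrite /= /D !inE; by case: (j != istar).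
  have cN : #|[pred j | (j != istar) && (j \notin D)]| = (n - t - 1 - #|D|)%N.
    have := cardID (mem D) [pred j | j != istar].
    have -> : #|[pred j | j != istar]| = (n - t - 1)%N.
      by rewrite cardC1 card_ord subn1.
    have -> : #|[predI [pred j | j != istar] & mem D]| = #|D|.
      rewrite -cD; apply: eq_card => j //.
    move=> <-. rewrite addKn. apply: eq_card => j; by rewrite !inE /= andbC.
  by rewrite cD cN.
have key := leq_trans S2 (leq_trans S3 (eq_leq S4)).
have h5 : (5 * q <= t)%N by rewrite /q mulnC leq_divM.
have H := @arith n t _ _ _ Hn HC h5 key.
have Hr : ((4 * n)%N%:R <= (4 * #|D| + 9 * t + 4)%N%:R :> rat)%R by rewrite ler_nat.
rewrite !natrD in Hr.
lra.
Qed.
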